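(* Let $(b,c)$ be a connected graph over a countable set $X$ with a cocompact action of a group $G$, and fix $x_0\in X$. Let $f_1,f_2\in\mathrm{Dom}(H_{b,c})$ be strictly positive, normalised by $f_1(x_0)=f_2(x_0)=1$, and multiplicative with the same character $\gamma_{f_1}=\gamma_{f_2}$. If $f_1$ is superharmonic and $f_2$ is subharmonic, then $f_1=f_2$ and both are harmonic.
   Context: A graph over $X$ is $(b,c)$ with $b:X\times X\to[0,\infty)$, $c:X\to\mathbb{R}$, $\sum_yb(x,y)<\infty$ ($b$ need not be symmetric); connected: any two points are joined by a finite sequence $y_1,\dots,y_n$ with $b(y_i,y_{i+1})>0$. $H_{b,c}f(x)=\sum_yb(x,y)(f(x)-f(y))+c(x)f(x)$ on $\mathrm{Dom}(H)=\{f:\sum_yb(x,y)|f(y)|<\infty\ \forall x\}$; $f$ is superharmonic if $Hf\ge0$, subharmonic if $Hf\le0$, harmonic if $Hf=0$. $T_gf(x)=f(g^{-1}x)$; cocompact: $GV=X$ for some finite $V$. $f$ is multiplicative with character $\gamma_f$ if $\gamma_f:G\to(0,\infty)$ is a homomorphism with $T_gf=\gamma_f(g^{-1})f$ for all $g\in G$. *)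

(* Defs.v *)
From HB Require Import structures.
From mathcomp Require Import all_boot all_order all_algebra.
From mathcomp Require Import monoid.
From mathcomp Require Import all_classical all_reals all_analysis.
Set Implicit Arguments. Unset Strict Implicit. Unset Printing Implicit Defensive.
Import Order.TTheory GRing.Theory Num.Theory.
Local Open Scope classical_set_scope.
Local Open Scope ring_scope.

Section GraphDefs.
Variables (R : realType) (X : countType).

(* sum over all of X of a real family: (sum of positive parts) - (sum of negative parts);
   this is the usual (absolutely convergent) sum whenever the family is summable *)
Definition rsum (F : X -> R) : R :=
  fine (\esum_(y in [set: X]) (Num.max (F y) 0)%:E)
  - fine (\esum_(y in [set: X]) (Num.max (- F y) 0)%:E).

Definition is_graph (b : X -> X -> R) (c : X -> R) : Prop :=
  (forall x y, 0 <= b x y) /\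
  (forall x, (\esum_(y in [set: X]) (b x y)%:E < +oo)%E).

Definition connected_graph (b : X -> X -> R) : Prop :=
  forall x y, exists (n : nat) (p : nat -> X),
    p 0%N = x /\ p n = y /\ (forall i, (i < n)%N -> 0 < b (p i) (p i.+1)).

Definition in_Dom (b : X -> X -> R) (f : X -> R) : Prop :=
  forall x, (\esum_(y in [set: X]) (b x y * `|f y|)%:E < +oo)%E.

Definition Hop (b : X -> X -> R) (c : X -> R) (f : X -> R) (x : X) : R :=
  rsum (fun y => b x y * (f x - f y)) + c x * f x.

Definition g_superharmonic (b : X -> X -> R) (c : X -> R) (f : X -> R) := forall x, 0 <= Hop b c f x.
Definition g_subharmonic (b : X -> X -> R) (c : X -> R) (f : X -> R) := forall x, Hop b c f x <= 0.
Definition g_harmonic (b : X -> X -> R) (c : X -> R) (f : X -> R) := forall x, Hop b c f x = 0.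

End GraphDefs.

Section GroupDefs.
Variables (R : realType) (X : countType) (G : groupType).

Definition is_action (act : G -> X -> X) : Prop :=
  (forall x, act 1%g x = x) /\ (forall g h x, act (g * h)%g x = act g (act h x)).

Definition graph_invariant (act : G -> X -> X) (b : X -> X -> R) (c : X -> R) : Prop :=
  (forall g x y, b (act g x) (act g y) = b x y) /\ (forall g x, c (act g x) = c x).

Definition cocompact (act : G -> X -> X) : Prop :=
  exists V : set X, finite_set V /\ forall x, exists g v, V v /\ x = act g v.

Definition Tg (act : G -> X -> X) (g : G) (f : X -> R) : X -> R :=
  fun x => f (act (g^-1)%g x).

Definition is_character (gamma : G -> R) : Prop :=
  (forall g, 0 < gamma g) /\ (forall g h, gamma (g * h)%g = gamma g * gamma h).

Definition multiplicative_with (act : G -> X -> X) (f : X -> R) (gamma : G -> R) : Prop :=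
  is_character gamma /\ forall g x, Tg act g f x = gamma (g^-1)%g * f x.

End GroupDefs.

(* Main.v *)
Require Import Defs.
From HB Require Import structures.
From mathcomp Require Import all_boot all_order all_algebra.
From mathcomp Require Import monoid.
From mathcomp Require Import all_classical all_reals all_analysis.
From mathcomp Require Import lra ring.
From mathcomp Require Import finmap.
Set Implicit Arguments. Unset Strict Implicit. Unset Printing Implicit Defensive.
Import Order.TTheory GRing.Theory Num.Theory.
Local Open Scope classical_set_scope.
Local Open Scope ring_scope.

Section H.
Variables (R : realType) (X : countType).
Local Notation es F := (\esum_(y in [set: X]) ((F y : R)%:E))%E.

Lemma esZ (k : R) (F : X -> R) : 0 < k ->
  es (fun y => k * F y) = (k%:E * es F)%E.
Proof.
move=> k0; rewrite /esum -ereal_sup_pZl//; congr ereal_sup.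
apply/seteqP; split => z /=.
  move=> [A [finA _]] <-.
  exists (\sum_(x \in A) (F x)%:E)%E; first by exists A.
  by rewrite !fsumEFin// -EFinM mulr_fsumr.
move=> [w [A [finA _] <-]] <-.
by exists A => //; rewrite !fsumEFin// -EFinM mulr_fsumr.
Qed.

Lemma es_ge0 (F : X -> R) : (forall y, 0 <= F y) -> (0 <= es F)%E.
Proof. by move=> h; apply: esum_ge0 => y _; rewrite lee_fin. Qed.

Lemma es_le (F G : X -> R) : (forall y, F y <= G y) -> (es F <= es G)%E.
Proof. by move=> h; apply: le_esum => y _; rewrite lee_fin. Qed.

Lemma es_D (F G : X -> R) : (forall y, 0 <= F y) -> (forall y, 0 <= G y) ->
  es (fun y => F y + G y) = (es F + es G)%E.
Proof.
move=> hF hG.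
transitivity (\esum_(y in [set: X]) ((F y)%:E + (G y)%:E))%E.
  by apply: eq_esum => y _; rewrite EFinD.
by rewrite esumD// => y _; rewrite lee_fin.
Qed.

Lemma es_fin (F : X -> R) : (forall y, 0 <= F y) -> (es F < +oo)%E ->
  es F = (fine (es F))%:E.
Proof.
move=> h1 h2; rewrite fineK//; rewrite ge0_fin_numE//; exact: es_ge0.
Qed.

Lemma es_single (F : X -> R) y0 : (forall y, 0 <= F y) -> ((F y0)%:E <= es F)%E.
Proof.
move=> h; apply: esum_ge; exists [set y0].
  by split; [exact: finite_set1| by []].
by rewrite fsbig_set1.
Qed.

Lemma es_real (F : X -> R) : (forall y, 0 <= F y) -> (es F < +oo)%E ->
  exists r, es F = r%:E /\ 0 <= r.
Proof.
move=> h1 h2; exists (fine (es F)); split; first exact: es_fin.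
by rewrite fine_ge0// es_ge0.
Qed.

Lemma mx_abs (t : R) : Num.max t 0 = (t + `|t|) / 2.
Proof. by rewrite maxr_absE subr0 addr0. Qed.

Lemma mx_ge0 (t : R) : 0 <= Num.max t 0.
Proof. rewrite mx_abs. have := ler_norm (-t). rewrite normrN. move=> h. lra. Qed.

Lemma mx_le (t : R) : Num.max t 0 <= `|t|.
Proof. by rewrite mx_abs; have := ler_norm t; lra. Qed.

Lemma mxN_le (t : R) : Num.max (- t) 0 <= `|t|.
Proof. by have := mx_le (-t); rewrite normrN. Qed.

Lemma rsum_shift (M : R) (F Dl : X -> R) : 0 < M ->
  (es (fun y => Num.max (F y) 0) < +oo)%E ->
  (es (fun y => Num.max (- F y) 0) < +oo)%E ->
  (forall y, 0 <= Dl y) -> (es Dl < +oo)%E ->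
  rsum (fun y => M * F y + Dl y) = M * rsum F + fine (es Dl).
Proof.
move=> M0 hp hn D0 hD.
set G := fun y => M * F y + Dl y.
have pt : forall y, Num.max (G y) 0 + M * Num.max (- F y) 0 =
    Num.max (- G y) 0 + (M * Num.max (F y) 0 + Dl y).
  move=> y; rewrite !mx_abs !normrN /G; lra.
have bG : forall y, Num.max (G y) 0 <= M * Num.max (F y) 0 + Dl y.
  move=> y; rewrite !mx_abs /G.
  have := ler_normD (M * F y) (Dl y); rewrite normrM (gtr0_norm M0) (ger0_norm (D0 y)).
  move: (D0 y) => ?; lra.
have bN : forall y, Num.max (- G y) 0 <= M * Num.max (- F y) 0.
  move=> y; rewrite !mx_abs !normrN /G.
  have := ler_normD (M * F y) (Dl y); rewrite normrM (gtr0_norm M0) (ger0_norm (D0 y)).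
  move: (D0 y) => ?; lra.
have [p [ep p0]] := es_real (fun y => mx_ge0 (F y)) hp.
have [n [en n0]] := es_real (fun y => mx_ge0 (- F y)) hn.
have [d [ed d0]] := es_real D0 hD.
have hpG : (es (fun y => Num.max (G y) 0) < +oo)%E.
  apply: (le_lt_trans (es_le bG)); rewrite es_D ?esZ ?ep ?ed//.
  - by rewrite -EFinM -EFinD ltry.
  - by move=> y; rewrite mulr_ge0 ?mx_ge0// ltW.
have hnG : (es (fun y => Num.max (- G y) 0) < +oo)%E.
  by apply: (le_lt_trans (es_le bN)); rewrite esZ ?en// -EFinM ltry.
have [pg [epg pg0]] := es_real (fun y => mx_ge0 (G y)) hpG.
have [ng [eng ng0]] := es_real (fun y => mx_ge0 (- G y)) hnG.
have E := congr1 (fun H => es H) (funext pt).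
move: E => /=; rewrite es_D; last 2 first.
- by move=> y; exact: mx_ge0.
- by move=> y; rewrite mulr_ge0 ?mx_ge0// ltW.
rewrite es_D; last 2 first.
- by move=> y; exact: mx_ge0.
- by move=> y; rewrite addr_ge0 ?mulr_ge0 ?mx_ge0// ltW.
rewrite es_D; last 2 first.
- by move=> y; rewrite mulr_ge0 ?mx_ge0// ltW.
- by [].
rewrite !esZ // epg eng ep en ed -!EFinM -!EFinD.
move=> E1; have E2 : pg + M * n = ng + (M * p + d) by apply: EFin_inj.
rewrite /rsum -/G epg eng ep en /=; lra.
Qed.

Lemma es_fin_le (F G : X -> R) : (forall y, F y <= G y) -> (es G < +oo)%E ->
  (es F < +oo)%E.
Proof. by move=> h h2; apply: le_lt_trans (es_le h) h2. Qed.

Lemma step (b : X -> X -> R) (c : X -> R) (f1 f2 : X -> R) (M : R) (x : X) :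
  is_graph b c -> in_Dom b f1 -> (forall y, 0 < f1 y) -> (forall y, 0 < f2 y) ->
  0 < M -> (forall y, f2 y <= M * f1 y) -> f2 x = M * f1 x ->
  0 <= Hop b c f1 x -> Hop b c f2 x <= 0 ->
  forall y, 0 < b x y -> f2 y = M * f1 y.
Proof.
move=> [b0 bfin] dom1 p1 p2 M0 le21 eqx H1 H2 y bxy.
set F1 := fun y => b x y * (f1 x - f1 y).
set Dl := fun y => b x y * (M * f1 y - f2 y).
have D0 : forall y, 0 <= Dl y.
  by move=> z; rewrite /Dl mulr_ge0 ?b0// subr_ge0.
have bnd : forall z, `|F1 z| <= f1 x * b x z + b x z * `|f1 z|.
  move=> z; rewrite /F1 normrM (ger0_norm (b0 _ _)).
  have := ler_normB (f1 x) (f1 z); rewrite (gtr0_norm (p1 x)) => h.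
  have := b0 x z => hb.
  by rewrite (mulrC (f1 x)) -mulrDr ler_wpM2l.
have finB : (es (fun z => f1 x * b x z + b x z * `|f1 z|) < +oo)%E.
  rewrite es_D; last 2 first.
  - by move=> z; rewrite mulr_ge0 ?b0// ltW.
  - by move=> z; rewrite mulr_ge0 ?b0.
  rewrite esZ//; apply: lte_add_pinfty; last exact: dom1.
  have := bfin x; have := @es_ge0 (fun z => b x z) (fun z => b0 x z).
  by case: (\esum_(z in _) _) => // r _ _; rewrite -EFinM ltry.
have hp : (es (fun z => Num.max (F1 z) 0) < +oo)%E.
  by apply: es_fin_le finB => z; apply: le_trans (mx_le _) (bnd z).
have hn : (es (fun z => Num.max (- F1 z) 0) < +oo)%E.
  by apply: es_fin_le finB => z; apply: le_trans (mxN_le _) (bnd z).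
have hD : (es Dl < +oo)%E.
  apply: (@es_fin_le _ (fun z => M * (b x z * `|f1 z|))).
    move=> z; rewrite /Dl mulrCA ler_wpM2l ?b0// (gtr0_norm (p1 z)).
    by have := p2 z; lra.
  have [r [er _]] := es_real (fun z => mulr_ge0 (b0 x z) (normr_ge0 (f1 z))) (dom1 x).
  by rewrite esZ// er -EFinM ltry.
have eF2 : (fun z => b x z * (f2 x - f2 z)) = (fun z => M * F1 z + Dl z).
  by apply/funext => z; rewrite /F1 /Dl eqx; ring.
have := rsum_shift M0 hp hn D0 hD.
rewrite -eF2 => hr.
move: H2; rewrite /Hop hr.
move: H1; rewrite /Hop -/F1 => H1 H2.
have [d [ed d0]] := es_real D0 hD.
have := es_single y D0; rewrite ed lee_fin => hy.
move: H2; rewrite ed /= eqx => H2.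
have : Dl y = 0.
  apply/eqP; rewrite eq_le D0 andbT.
  have : 0 <= M * (rsum F1 + c x * f1 x) by rewrite mulr_ge0// ltW.
  move=> h; nra.
rewrite /Dl => /eqP; rewrite mulf_eq0 (gt_eqF bxy) /= subr_eq0 => /eqP ->.
by [].
Qed.

Lemma argmax (h : X -> R) (s : seq X) v : v \in s ->
  exists2 x, x \in s & forall y, y \in s -> h y <= h x.
Proof.
elim: s v => [//|a s IH] v _.
case: s IH => [|a' s'] IH.
  by exists a; rewrite ?mem_seq1// => y; rewrite mem_seq1 => /eqP->.
have [x xin hx] := IH a' (mem_head _ _).
have [le|lt] := leP (h a) (h x).
  exists x; first by rewrite in_cons xin orbT.
  by move=> y; rewrite in_cons => /orP[/eqP->//|/hx].
exists a; first exact: mem_head.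
move=> y; rewrite in_cons => /orP[/eqP->//|/hx hy].
exact: le_trans hy (ltW lt).
Qed.
End H.

Unset Implicit Arguments.
Set Strict Implicit.
Theorem lemma9 (R : realType) (X : countType) (G : groupType)
  (b : X -> X -> R) (c : X -> R) (act : G -> X -> X) (x0 : X)
  (f1 f2 : X -> R) (gamma : G -> R) :
  is_graph b c -> connected_graph b ->
  is_action act -> graph_invariant act b c -> cocompact act ->
  in_Dom b f1 -> in_Dom b f2 ->
  (forall x, 0 < f1 x) -> (forall x, 0 < f2 x) ->
  f1 x0 = 1 -> f2 x0 = 1 ->
  multiplicative_with act f1 gamma -> multiplicative_with act f2 gamma ->
  g_superharmonic b c f1 -> g_subharmonic b c f2 ->
  f1 = f2 /\ g_harmonic b c f1 /\ g_harmonic b c f2.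
Proof.
move=> gr conn _ _ [V [finV covV]] dom1 _ p1 p2 e1 e2 [[gp _] m1] [_ m2] sup1 sub2.
have inv : forall (f : X -> R), (forall g x, Tg act g f x = gamma (g^-1)%g * f x) ->
    forall g v, f (act g v) = gamma g * f v.
  by move=> f m g v; have := m (g^-1)%g v; rewrite /Tg !invgK.
set h := fun y => f2 y / f1 y.
have hinv : forall g v, h (act g v) = h v.
  move=> g v; rewrite /h (inv _ m1) (inv _ m2).
  have := gp g; have := p1 v => ? ?; field.
  by apply/andP; split; apply: lt0r_neq0.
have [B eB] := (finite_fsetP.1 finV).
have [g0 [v0 [Vv0 _]]] := covV x0.
have v0B : v0 \in B by move: Vv0; rewrite eB.
have [x1 x1B hx1] := argmax h v0B.
set M := h x1.
have M0 : 0 < M by rewrite /M /h divr_gt0.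
have le21 : forall y, f2 y <= M * f1 y.
  move=> y; have [g [v [Vv ->]]] := covV y.
  have : h (act g v) <= M by rewrite hinv; apply: hx1; move: Vv; rewrite eB.
  by rewrite /h ler_pdivrMr.
have eqx1 : f2 x1 = M * f1 x1.
  by rewrite /M /h; have := p1 x1 => ?; field; apply: lt0r_neq0.
have prop : forall y, f2 y = M * f1 y.
  move=> y; have [n [p [p0 [pn hp]]]] := conn x1 y.
  suff : forall i, (i <= n)%N -> f2 (p i) = M * f1 (p i) by move/(_ n (leqnn n)); rewrite pn.
  elim => [_|i IH le]; first by rewrite p0.
  apply: (step gr dom1 p1 p2 M0 le21 (IH (ltnW le)) (sup1 _) (sub2 _)).
  exact: hp.
have M1 : M = 1 by have := prop x0; rewrite e1 e2 mulr1.
have ef : f1 = f2 by apply/funext => y; rewrite prop M1 mul1r.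
split=> //; rewrite -ef; split=> x; apply/eqP; rewrite eq_le sup1 andbT;
  by have := sub2 x; rewrite -ef.
Qed.
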